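(* Let $\alpha=\{a_k\}_{k\ge1}$ be a sequence of positive real numbers such that $A^*(m):=\#\{k: a_k\le m\}$ satisfies $A^*(m)=O(m^\nu)$ as $m\to\infty$ for some $\nu>0$. Then $\lim_{N\to\infty}E[U_j^N]=I(\alpha;j)<\infty$ for all $j\ge2$.
   Context: For $N\ge2$, coupon type $k\in\{1,\dots,N\}$ has probability $a_k/\sum_{i=1}^Na_i$; $U_j^N$ is the number of empty album places of the $j$-th collector when the first collector completes her set (each collector passes duplicates to the next one), with $$E[U_j^N]=\sum_{k=1}^N\int_0^\infty a_k e^{-a_k t}\frac{(a_kt)^{j-1}}{(j-1)!}\prod_{i\ne k,\,1\le i\le N}\big(1-e^{-a_i t}\big)\,dt.$$ $x_\alpha:=\inf\{x\in[0,1]:\sum_k x^{a_k}=\infty\}$, $L(x;\alpha;j):=\sum_{k}a_k^j\frac{x^{a_k}}{1-x^{a_k}}$, $F(x;\alpha):=\prod_{k}(1-x^{a_k})$, $I(\alpha;j):=\frac{1}{(j-1)!}\int_0^{x_\alpha}L(x;\alpha;j)F(x;\alpha)|\ln x|^{j-1}\frac{dx}{x}$. *)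

(* Defs.v *)
From Stdlib Require Import Reals Lra ClassicalEpsilon Arith Factorial.
Open Scope R_scope.

(* sumR n f = f 1 + ... + f n ; prodR n f = f 1 * ... * f n *)
Fixpoint sumR (n : nat) (f : nat -> R) : R :=
  match n with O => 0 | S m => sumR m f + f (S m) end.
Fixpoint prodR (n : nat) (f : nat -> R) : R :=
  match n with O => 1 | S m => prodR m f * f (S m) end.

(* x^a for x in [0,1], a > 0, with the convention 0^a = 0 *)
Definition rpow (x a : R) : R := if Rle_dec x 0 then 0 else Rpower x a.

(* the limit of a sequence if it converges, 0 otherwise *)
Definition seq_lim (u : nat -> R) : R :=
  match excluded_middle_informative (exists l, Un_cv u l) with
  | left H => proj1_sig (constructive_indefinite_description _ H)
  | right _ => 0
  end.

(* A*(m) restricted to the first n indices: #{1<=k<=n : a_k <= m} *)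
Definition Astar_upto (a : nat -> R) (n : nat) (m : R) : R :=
  sumR n (fun k => if Rle_dec (a k) m then 1 else 0).

(* integrand of E[U_j^N] *)
Definition EU_integrand (a : nat -> R) (N j : nat) (t : R) : R :=
  sumR N (fun k =>
    a k * exp (- (a k * t)) * (a k * t) ^ (j - 1) / INR (fact (j - 1))
    * prodR N (fun i => if Nat.eq_dec i k then 1 else 1 - exp (- (a i * t)))).

Definition improper_int0 (f : R -> R) (l : R) : Prop :=
  (forall T, 0 <= T -> inhabited (Riemann_integrable f 0 T)) /\
  forall eps, eps > 0 -> exists T0, forall T (pr : Riemann_integrable f 0 T),
    T0 <= T -> Rabs (RiemannInt pr - l) < eps.

Definition improper_int_open (f : R -> R) (lo hi l : R) : Prop :=
  (forall u v, lo < u -> u <= v -> v < hi -> inhabited (Riemann_integrable f u v)) /\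
  forall eps, eps > 0 -> exists d, d > 0 /\
    forall u v (pr : Riemann_integrable f u v),
      lo < u -> u < lo + d -> hi - d < v -> v < hi -> u <= v ->
      Rabs (RiemannInt pr - l) < eps.

Definition sum_pow_diverges (a : nat -> R) (x : R) : Prop :=
  cv_infty (fun n => sumR n (fun k => rpow x (a k))).

Definition is_inf (S : R -> Prop) (x : R) : Prop :=
  (forall y, S y -> x <= y) /\ (forall z, (forall y, S y -> z <= y) -> z <= x).

Definition is_x_alpha (a : nat -> R) (x : R) : Prop :=
  is_inf (fun y => 0 <= y <= 1 /\ sum_pow_diverges a y) x.

Definition Lfun (a : nat -> R) (x : R) (j : nat) : R :=
  seq_lim (fun n => sumR n (fun k => a k ^ j * rpow x (a k) / (1 - rpow x (a k)))).
Definition Ffun (a : nat -> R) (x : R) : R :=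
  seq_lim (fun n => prodR n (fun k => 1 - rpow x (a k))).

(* integrand of I(alpha;j) (with the 1/(j-1)! factor) *)
Definition I_integrand (a : nat -> R) (j : nat) (x : R) : R :=
  / INR (fact (j - 1)) * Lfun a x j * Ffun a x * (Rabs (ln x)) ^ (j - 1) / x.

(* Main.v *)
Require Import Defs.
From Stdlib Require Import Reals Lra Lia ClassicalEpsilon Classical Arith Factorial ZArith.
Open Scope R_scope.

Lemma sumR_ext n f g : (forall k, (1 <= k <= n)%nat -> f k = g k) -> sumR n f = sumR n g.
Proof. induction n; simpl; intros H; auto. rewrite IHn by (intros; apply H; lia). rewrite H by lia; reflexivity. Qed.

Lemma sumR_le n f g : (forall k, (1 <= k <= n)%nat -> f k <= g k) -> sumR n f <= sumR n g.
Proof. induction n; simpl; intros H; try lra. apply Rplus_le_compat; [apply IHn|apply H]; intros; try apply H; lia. Qed.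

Lemma sumR_nonneg n f : (forall k, (1 <= k <= n)%nat -> 0 <= f k) -> 0 <= sumR n f.
Proof. intros H. replace 0 with (sumR n (fun _ => 0)). apply sumR_le; auto.
 induction n; simpl; auto; rewrite IHn; [lra|intros; apply H; lia]. Qed.

Lemma sumR_plus n f g : sumR n (fun k => f k + g k) = sumR n f + sumR n g.
Proof. induction n; simpl; [lra|rewrite IHn; lra]. Qed.

Lemma sumR_scal n c f : sumR n (fun k => c * f k) = c * sumR n f.
Proof. induction n; simpl; [lra|rewrite IHn; lra]. Qed.

Lemma sumR_zero n : sumR n (fun _ => 0) = 0.
Proof. induction n; simpl; [lra|rewrite IHn; lra]. Qed.

Lemma sumR_mono_n n m f : (forall k, 0 <= f k) -> (n <= m)%nat -> sumR n f <= sumR m f.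
Proof. intros H Hnm. induction Hnm; simpl; try lra. specialize (H (S m)); lra. Qed.

Lemma sumR_swap n m (f : nat -> nat -> R) :
  sumR n (fun k => sumR m (fun l => f k l)) = sumR m (fun l => sumR n (fun k => f k l)).
Proof. induction n; simpl. now rewrite sumR_zero. rewrite IHn, <- sumR_plus. reflexivity. Qed.

Lemma sumR_ge_term n f k : (forall i, 0 <= f i) -> (1 <= k <= n)%nat -> f k <= sumR n f.
Proof. intros H Hk. induction n; [lia|]. simpl. destruct (Nat.eq_dec k (S n)).
 subst. pose proof (sumR_nonneg n f (fun i _ => H i)); lra.
 pose proof (H (S n)). assert (f k <= sumR n f) by (apply IHn; lia). lra. Qed.

Lemma sumR_diff n m f : (n <= m)%nat -> sumR m f - sumR n f = sumR (m - n) (fun k => f (n + k)%nat).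
Proof. intros H; induction H. rewrite Nat.sub_diag; simpl; lra.
 replace (S m - n)%nat with (S (m - n)) by lia. simpl. rewrite <- IHle.
 replace (n + S (m - n))%nat with (S m) by lia. lra. Qed.

Lemma prodR_ext n f g : (forall k, (1 <= k <= n)%nat -> f k = g k) -> prodR n f = prodR n g.
Proof. induction n; simpl; intros H; auto. rewrite IHn by (intros; apply H; lia). rewrite H by lia; reflexivity. Qed.

Lemma prodR_01 n f : (forall k, (1 <= k <= n)%nat -> 0 <= f k <= 1) -> 0 <= prodR n f <= 1.
Proof. induction n; simpl; intros H; try lra. destruct IHn as [A B]. intros; apply H; lia.
 destruct (H (S n)) as [C D]; try lia. split. apply Rmult_le_pos; lra.
 replace 1 with (1*1) by lra. apply Rmult_le_compat; lra. Qed.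

Lemma prodR_S n f : prodR (S n) f = prodR n f * f (S n).
Proof. reflexivity. Qed.
Lemma sumR_S n f : sumR (S n) f = sumR n f + f (S n).
Proof. reflexivity. Qed.

Lemma prodR_except n f k : (1 <= k <= n)%nat ->
  prodR n (fun i => if Nat.eq_dec i k then 1 else f i) * f k = prodR n f.
Proof. induction n; intros Hk; [lia|]. rewrite !prodR_S. destruct (Nat.eq_dec (S n) k).
 subst. rewrite (prodR_ext n _ f). lra. intros i Hi. destruct (Nat.eq_dec i (S n)); [lia|auto].
 rewrite <- IHn by lia. lra. Qed.

Lemma seq_lim_eq u l : Un_cv u l -> seq_lim u = l.
Proof. intros H. unfold seq_lim. destruct (excluded_middle_informative _) as [e|e].
 destruct (constructive_indefinite_description _ e) as [l' Hl']; simpl. eapply UL_sequence; eauto.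
 exfalso; apply e; eauto. Qed.

Lemma exp_pow_n x n : exp x ^ n = exp (INR n * x).
Proof. induction n. simpl; rewrite Rmult_0_l, exp_0; auto.
 rewrite S_INR, <- tech_pow_Rmult, IHn, <- exp_plus. f_equal; ring. Qed.

Lemma pow_le_exp Q y : 0 <= y -> y ^ Q <= INR Q ^ Q * exp y.
Proof. intros Hy. destruct Q. simpl. pose proof (exp_ineq1_le y); lra.
 set (q := INR (S Q)). assert (Hq : 0 < q) by (apply lt_0_INR; lia).
 replace (y ^ S Q) with (q ^ S Q * (y / q) ^ S Q).
 2:{ rewrite <- Rpow_mult_distr. f_equal. field. lra. }
 apply Rmult_le_compat_l. apply pow_le; lra.
 replace (exp y) with (exp (y / q) ^ S Q).
 2:{ rewrite exp_pow_n. f_equal. fold q. field. lra. }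
 apply pow_incr. split. apply Rmult_le_pos; [lra|left; apply Rinv_0_lt_compat; lra].
 pose proof (exp_ineq1_le (y/q)). assert (0 <= y/q) by (apply Rmult_le_pos; [lra|left; apply Rinv_0_lt_compat; lra]). lra. Qed.

Lemma geom_le r K : 0 <= r < 1 -> sumR K (fun m => r ^ m) <= 1 / (1 - r).
Proof. intros Hr. assert (E : (1 - r) * sumR K (fun m => r ^ m) = r - r ^ (S K)).
 { induction K. simpl; ring. rewrite sumR_S, Rmult_plus_distr_l, IHK. simpl. ring. }
 assert (0 <= r ^ S K) by (apply pow_le; lra).
 apply (Rmult_le_reg_l (1 - r)). lra. rewrite E. field_simplify; lra. Qed.

Lemma one_minus_exp s : 0 < s <= 1 -> s / 2 <= 1 - exp (- s).
Proof. intros Hs. pose proof (exp_ineq1_le s). assert (exp (-s) = / exp s) by (apply exp_Ropp).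
 rewrite H0. assert (0 < exp s) by apply exp_pos.
 apply (Rmult_le_reg_r (exp s)); auto. field_simplify; try lra.
 assert (s * exp s <= 2 * exp s - 2); [|lra].
 (* s e^s <= 2e^s - 2  <=> 2 <= (2 - s) e^s ; (2-s)(1+s) = 2 + s - s^2 >= 2 *)
 assert ((2 - s) * (1 + s) <= (2 - s) * exp s) by (apply Rmult_le_compat_l; lra). nra. Qed.

Lemma exp_le_inc x y : x <= y -> exp x <= exp y.
Proof. intros [H|H]. left; apply exp_increasing; auto. subst; lra. Qed.

Lemma Astar_mono a n m m' : m <= m' -> Astar_upto a n m <= Astar_upto a n m'.
Proof. intros H. unfold Astar_upto. apply sumR_le. intros k _.
 destruct (Rle_dec (a k) m), (Rle_dec (a k) m'); lra. Qed.

Lemma Astar_nonneg a n m : 0 <= Astar_upto a n m.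
Proof. unfold Astar_upto. apply sumR_nonneg. intros k _. destruct (Rle_dec (a k) m); lra. Qed.

Definition bk (x : R) : nat := Z.to_nat (up x).

Lemma bk_spec x : 0 < x -> (1 <= bk x)%nat /\ INR (bk x) - 1 <= x < INR (bk x).
Proof. intros Hx. destruct (archimed x) as [H1 H2]. unfold bk.
 assert (0 < up x)%Z. { apply lt_IZR. simpl. lra. }
 rewrite INR_IZR_INZ, Z2Nat.id by lia. split; [lia|lra]. Qed.

Lemma Astar_poly a (Hgr : exists C nu M, 0 < nu /\ 0 < M /\
     forall m, M <= m -> forall n, Astar_upto a n m <= C * Rpower m nu) :
  exists C' P, 0 <= C' /\ forall n (m : nat), (1 <= m)%nat -> Astar_upto a n (INR m) <= C' * INR m ^ P.
Proof. destruct Hgr as (C & nu & M & Hnu & HM & H).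
 set (M' := Rmax M 1). set (P := bk nu). destruct (bk_spec nu Hnu) as [_ [HP1 HP2]]. fold P in HP1, HP2.
 exists (Rabs C * M' ^ P), P. split. apply Rmult_le_pos. apply Rabs_pos. apply pow_le; unfold M'; pose proof (Rmax_r M 1); lra.
 intros n m Hm. assert (Hm1 : 1 <= INR m) by (apply (le_INR 1); lia).
 set (y := Rmax (INR m) M').
 assert (Hy1 : 1 <= y) by (unfold y, M'; pose proof (Rmax_l (INR m) (Rmax M 1)); lra).
 apply Rle_trans with (Astar_upto a n y). apply Astar_mono; apply Rmax_l.
 apply Rle_trans with (C * Rpower y nu). apply H. unfold y, M'; pose proof (Rmax_l M 1); pose proof (Rmax_r (INR m) (Rmax M 1)); lra.
 assert (0 < Rpower y nu) by (unfold Rpower; apply exp_pos).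
 apply Rle_trans with (Rabs C * Rpower y nu). apply Rmult_le_compat_r; [lra|apply Rle_abs].
 rewrite Rmult_assoc. apply Rmult_le_compat_l. apply Rabs_pos.
 apply Rle_trans with (Rpower y (INR P)). apply Rle_Rpower; lra.
 rewrite Rpower_pow by lra. rewrite <- Rpow_mult_distr. apply pow_incr. split. lra.
 assert (1 <= M') by (unfold M'; apply Rmax_r).
 unfold y. apply Rmax_lub. rewrite <- (Rmult_1_l (INR m)) at 1. apply Rmult_le_compat_r; lra.
 rewrite <- (Rmult_1_r M') at 1. apply Rmult_le_compat_l; lra. Qed.

Fixpoint Kmax (a : nat -> R) (n : nat) : nat :=
  match n with O => O | S m => Nat.max (Kmax a m) (bk (a (S m))) end.

Lemma Kmax_spec a n k : (1 <= k <= n)%nat -> (bk (a k) <= Kmax a n)%nat.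
Proof. induction n; intros H; simpl. lia. destruct (Nat.eq_dec k (S n)). subst; lia.
 specialize (IHn ltac:(lia)); lia. Qed.

Lemma GS a (Hpos : forall k, (1 <= k)%nat -> 0 < a k)
  (Hgr : exists C nu M, 0 < nu /\ 0 < M /\
     forall m, M <= m -> forall n, Astar_upto a n m <= C * Rpower m nu) (p : nat) :
  exists K q, 0 < K /\ forall t, 0 < t <= 1 -> forall n,
    sumR n (fun k => (a k ^ p + 1) * exp (- (a k * t))) <= K / t ^ q.
Proof.
 destruct (Astar_poly a Hgr) as (C' & P & HC' & HA).
 set (Q := (p + P)%nat).
 set (K0 := 6 * (C' + 1) * INR Q ^ Q * 2 ^ Q * 4).
 assert (HK0 : 0 < K0).
 { unfold K0. assert (0 < INR Q ^ Q). { destruct Q. simpl; lra. apply pow_lt, lt_0_INR; lia. }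
   assert (0 < 2 ^ Q) by (apply pow_lt; lra). assert (0 < 6 * (C'+1)) by lra.
   repeat apply Rmult_lt_0_compat; lra. }
 exists K0, (S Q). split; auto. intros t Ht n.
 set (psi := fun m : nat => (INR m ^ p + 1) * exp (- ((INR m - 1) * t))).
 set (ind := fun k (m : nat) => if Rle_dec (INR m - 1) (a k) then if Rlt_dec (a k) (INR m) then 1 else 0 else 0).
 set (Kb := Kmax a n).
 assert (Hpsi : forall m, 0 <= psi m).
 { intros m; unfold psi. apply Rmult_le_pos. pose proof (pow_le (INR m) p (pos_INR m)); lra. left; apply exp_pos. }
 assert (Hind : forall k m, 0 <= ind k m <= 1).
 { intros k m; unfold ind. destruct (Rle_dec _ _); [destruct (Rlt_dec _ _)|]; lra. }
 apply Rle_trans with (sumR n (fun k => sumR Kb (fun m => psi m * ind k m))).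
 { apply sumR_le. intros k Hk. destruct (bk_spec (a k) (Hpos k ltac:(lia))) as [Hb1 [Hb2 Hb3]].
   apply Rle_trans with (psi (bk (a k)) * ind k (bk (a k))).
   - unfold ind. destruct (Rle_dec _ _); [|lra]. destruct (Rlt_dec _ _); [|lra]. rewrite Rmult_1_r.
     unfold psi. pose proof (Hpos k ltac:(lia)). apply Rmult_le_compat.
     pose proof (pow_le (a k) p ltac:(lra)); lra. left; apply exp_pos.
     apply Rplus_le_compat_r. apply pow_incr; lra.
     apply exp_le_inc. apply Ropp_le_contravar. apply Rmult_le_compat_r; lra.
   - apply (sumR_ge_term Kb (fun m => psi m * ind k m) (bk (a k))).
     intros i; apply Rmult_le_pos; [apply Hpsi|apply Hind].
     split; auto. apply Kmax_spec; lia. }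
 rewrite sumR_swap.
 apply Rle_trans with (sumR Kb (fun m => psi m * (C' * INR m ^ P))).
 { apply sumR_le. intros m Hm. rewrite sumR_scal. apply Rmult_le_compat_l; auto.
   apply Rle_trans with (Astar_upto a n (INR m)); [|apply HA; lia].
   unfold Astar_upto. apply sumR_le. intros k _. unfold ind.
   destruct (Rle_dec (INR m - 1) (a k)); [destruct (Rlt_dec (a k) (INR m))|];
   destruct (Rle_dec (a k) (INR m)); lra. }
 set (r := exp (- (t / 2))).
 apply Rle_trans with (sumR Kb (fun m => (2 * 3 * C' * (INR Q ^ Q * (2 / t) ^ Q)) * r ^ m)).
 { apply sumR_le. intros m Hm. unfold psi, r. rewrite exp_pow_n.
   assert (H1 : 1 <= INR m) by (apply (le_INR 1); lia).
   assert (H2 : INR m ^ p + 1 <= 2 * INR m ^ p).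
   { assert (1 <= INR m ^ p) by (apply pow_R1_Rle; lra). lra. }
   assert (H3 : exp (- ((INR m - 1) * t)) = exp t * exp (- (INR m * t))).
   { rewrite <- exp_plus. f_equal; ring. }
   assert (H4 : exp t <= 3). { apply Rle_trans with (exp 1). apply exp_le_inc; lra. apply exp_le_3. }
   assert (H5 : INR m ^ Q <= INR Q ^ Q * (2 / t) ^ Q * exp (INR m * t / 2)).
   { assert (HH := pow_le_exp Q (INR m * t / 2) ltac:(apply Rmult_le_pos; [apply Rmult_le_pos|]; lra)).
     replace (INR m) with ((INR m * t / 2) * (2 / t)) at 1 by (field; lra).
     rewrite Rpow_mult_distr. assert (0 < (2/t)^Q) by (apply pow_lt; apply Rdiv_lt_0_compat; lra).
     rewrite (Rmult_comm (INR Q ^ Q)), Rmult_assoc. rewrite (Rmult_comm _ (_ ^ Q)).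
     apply Rmult_le_compat_l; lra. }
   assert (H6 : exp (INR m * t / 2) * exp (- (INR m * t)) = exp (INR m * - (t / 2))).
   { rewrite <- exp_plus; f_equal; field. }
   rewrite H3. unfold Q in H5. rewrite pow_add in H5.
   assert (0 <= INR m ^ p) by (apply pow_le; lra). assert (0 <= INR m ^ P) by (apply pow_le; lra).
   assert (0 < exp t) by apply exp_pos. assert (0 < exp (- (INR m * t))) by apply exp_pos.
   set (E1 := exp t) in *. set (E2 := exp (- (INR m * t))) in *.
   set (X := INR m ^ p) in *. set (Y := INR m ^ P) in *.
   rewrite <- H6. fold Q in H5. set (Z := INR Q ^ Q * (2 / t) ^ Q) in *. set (W := exp (INR m * t / 2)) in *.
   apply Rle_trans with (2 * X * 3 * E2 * C' * Y).
   { assert (0 <= C' * Y) by (apply Rmult_le_pos; lra).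
     assert ((X + 1) * (E1 * E2) <= 2 * X * 3 * E2).
     { apply Rle_trans with ((2 * X) * (3 * E2)). apply Rmult_le_compat; try nra. lra. }
     nra. }
   assert (0 <= C' * E2) by (apply Rmult_le_pos; lra). nra. }
 rewrite sumR_scal.
 assert (Hr : 0 <= r < 1). { unfold r; split. left; apply exp_pos. rewrite <- exp_0. apply exp_increasing; lra. }
 assert (Hr2 : t / 4 <= 1 - r). { unfold r. pose proof (one_minus_exp (t/2) ltac:(lra)). lra. }
 pose proof (geom_le r Kb Hr) as G.
 assert (G2 : sumR Kb (fun m => r ^ m) <= 4 / t).
 { apply Rle_trans with (1 / (1 - r)); auto. unfold Rdiv; rewrite Rmult_1_l.
   replace (4 * / t) with (/ (t / 4)) by (field; lra). apply Rinv_le_contravar; lra. }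
 assert (HQ : 0 <= INR Q ^ Q) by (apply pow_le, pos_INR).
 assert (Ht2 : (2 / t) ^ Q = 2 ^ Q / t ^ Q).
 { unfold Rdiv. rewrite Rpow_mult_distr, pow_inv. reflexivity. }
 assert (0 < t ^ Q) by (apply pow_lt; lra).
 assert (0 <= 2 * 3 * C' * (INR Q ^ Q * (2 / t) ^ Q)).
 { rewrite Ht2. repeat apply Rmult_le_pos; try lra. apply pow_le; lra. left; apply Rinv_0_lt_compat; auto. }
 apply Rle_trans with (2 * 3 * C' * (INR Q ^ Q * (2 / t) ^ Q) * (4 / t)).
 apply Rmult_le_compat_l; auto.
 rewrite Ht2. unfold K0. simpl pow. apply Rmult_le_reg_r with (t * t ^ Q). apply Rmult_lt_0_compat; lra.
 field_simplify; try lra.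
 assert (0 <= INR Q ^ Q * 2 ^ Q) by (apply Rmult_le_pos; auto; apply pow_le; lra).
 nra.
Qed.

Lemma Astar_mono_n a n n' m : (n <= n')%nat -> Astar_upto a n m <= Astar_upto a n' m.
Proof. intros H. unfold Astar_upto. apply sumR_mono_n; auto. intros k; destruct (Rle_dec _ _); lra. Qed.

Lemma amin_ex a (Hpos : forall k, (1 <= k)%nat -> 0 < a k)
  (Hgr : exists C nu M, 0 < nu /\ 0 < M /\
     forall m, M <= m -> forall n, Astar_upto a n m <= C * Rpower m nu) :
  exists c, 0 < c /\ forall k, (1 <= k)%nat -> c <= a k.
Proof.
 destruct (Astar_poly a Hgr) as (C' & P & HC' & HA).
 assert (HB : forall n, Astar_upto a n 1 <= C'). { intros n. pose proof (HA n 1%nat ltac:(lia)). simpl in H. rewrite pow1 in H. lra. }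
 assert (HN1 : exists N1, forall k, (k > N1)%nat -> 1 < a k).
 { apply NNPP; intros Hc.
   assert (Hr : forall r : nat, exists n, INR r <= Astar_upto a n 1).
   { induction r. exists 0%nat. simpl. unfold Astar_upto; simpl; lra.
     destruct IHr as [n Hn]. destruct (classic (exists k, (k > n)%nat /\ a k <= 1)) as [[k [Hk1 Hk2]]|Hk].
     - exists k. destruct k; [lia|]. unfold Astar_upto at 1. rewrite sumR_S.
       destruct (Rle_dec (a (S k)) 1); [|lra]. rewrite S_INR.
       pose proof (Astar_mono_n a n k 1 ltac:(lia)). unfold Astar_upto in *. lra.
     - exfalso; apply Hc. exists n. intros k Hk'. apply Rnot_le_lt. intros Hle. apply Hk; eauto. }
   destruct (INR_archimed 1 C' ltac:(lra)) as [r Hr'].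
   destruct (Hr r) as [n Hn]. specialize (HB n). lra. }
 destruct HN1 as [N1 HN1].
 assert (Hfin : forall N, exists c, 0 < c /\ forall k, (1 <= k <= N)%nat -> c <= a k).
 { induction N. exists 1; split; [lra|intros; lia].
   destruct IHN as [c [Hc Hk]]. exists (Rmin c (a (S N))). split.
   apply Rmin_glb_lt; auto. apply Hpos; lia.
   intros k Hk'. destruct (Nat.eq_dec k (S N)). subst; apply Rmin_r.
   apply Rle_trans with c. apply Rmin_l. apply Hk; lia. }
 destruct (Hfin N1) as [c [Hc Hk]]. exists (Rmin c 1). split. apply Rmin_glb_lt; lra.
 intros k Hk1. destruct (le_lt_dec k N1).
 apply Rle_trans with c; [apply Rmin_l|apply Hk; lia].
 apply Rle_trans with 1; [apply Rmin_r|left; apply HN1; lia]. Qed.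

Lemma cv_le u l n0 b : Un_cv u l -> (forall m, (n0 <= m)%nat -> u m <= b) -> l <= b.
Proof. intros H Hb. apply Rnot_lt_le; intros Hc. destruct (H (l - b) ltac:(lra)) as [N HN].
 specialize (HN (max N n0) ltac:(lia)). specialize (Hb (max N n0) ltac:(lia)).
 unfold R_dist in HN. apply Rabs_def2 in HN. lra. Qed.

Lemma cv_ge u l n0 b : Un_cv u l -> (forall m, (n0 <= m)%nat -> b <= u m) -> b <= l.
Proof. intros H Hb. apply Rnot_lt_le; intros Hc. destruct (H (b - l) ltac:(lra)) as [N HN].
 specialize (HN (max N n0) ltac:(lia)). specialize (Hb (max N n0) ltac:(lia)).
 unfold R_dist in HN. apply Rabs_def2 in HN. lra. Qed.

Lemma rpow_exp t b : rpow (exp (- t)) b = exp (- (b * t)).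
Proof. unfold rpow. destruct (Rle_dec (exp (-t)) 0). pose proof (exp_pos (-t)); lra.
 unfold Rpower. rewrite ln_exp. f_equal; ring. Qed.

Section Ser.
Variable a : nat -> R.
Variable j : nat.
Hypothesis Hpos : forall k, (1 <= k)%nat -> 0 < a k.
Hypothesis Hgr : exists C nu M, 0 < nu /\ 0 < M /\
     forall m, M <= m -> forall n, Astar_upto a n m <= C * Rpower m nu.

Definition w (d : R) (k : nat) := (a k ^ j + 1) * exp (- (a k * d)).
Definition Sn d n := sumR n (w d).

Lemma w_nonneg d k : (1 <= k)%nat -> 0 <= w d k.
Proof. intros Hk. unfold w. apply Rmult_le_pos. pose proof (pow_le (a k) j ltac:(pose proof (Hpos k Hk); lra)); lra.
 left; apply exp_pos. Qed.

Lemma Sn_bound d : 0 < d -> exists B, forall n, Sn d n <= B.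
Proof. intros Hd. destruct (GS a Hpos Hgr j) as (K & q & HK & H).
 set (t := Rmin d 1). assert (Ht : 0 < t <= 1) by (unfold t; split; [apply Rmin_glb_lt; lra|apply Rmin_r]).
 exists (K / t ^ q). intros n. eapply Rle_trans; [|apply (H t Ht n)]. apply sumR_le. intros k Hk.
 unfold w. apply Rmult_le_compat_l. pose proof (pow_le (a k) j ltac:(pose proof (Hpos k ltac:(lia)); lra)); lra.
 apply exp_le_inc. apply Ropp_le_contravar. apply Rmult_le_compat_l. pose proof (Hpos k ltac:(lia)); lra. apply Rmin_l. Qed.

Lemma Sn_grow d n m : (n <= m)%nat -> Sn d n <= Sn d m.
Proof. intros H; induction H. lra. unfold Sn in *; rewrite sumR_S. pose proof (w_nonneg d (S m) ltac:(lia)). lra. Qed.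

Lemma Sn_cv d : 0 < d -> exists S, Un_cv (Sn d) S /\ forall n, Sn d n <= S.
Proof. intros Hd. destruct (Sn_bound d Hd) as [B HB].
 destruct (growing_cv (Sn d)) as [S HS]. intros n; apply Sn_grow; lia. exists B; intros x [n ->]; auto.
 exists S; split; auto. intros n. apply (cv_ge _ _ n _ HS). intros; apply Sn_grow; auto. Qed.

Lemma Sn_tail d : 0 < d -> forall eps, 0 < eps -> exists N, forall n m, (N <= n)%nat -> (n <= m)%nat ->
  Sn d m - Sn d n <= eps.
Proof. intros Hd eps He. destruct (Sn_cv d Hd) as [S [HS HSb]]. destruct (HS eps He) as [N HN].
 exists N; intros n m Hn Hm. specialize (HN n Hn). unfold R_dist in HN. apply Rabs_def2 in HN.
 pose proof (HSb m). lra. Qed.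

End Ser.

From Coquelicot Require Import Coquelicot.

Lemma prod_small N N0 k mu f : 0 <= mu <= 1 -> (N0 <= N)%nat -> (1 <= k)%nat ->
  (forall i, (1 <= i <= N)%nat -> 0 <= f i <= 1) -> (forall i, (1 <= i <= N0)%nat -> f i <= mu) ->
  prodR N (fun i => if Nat.eq_dec i k then 1 else f i) <= mu ^ (N0 - 1).
Proof. intros Hmu HN Hk Hf Hfm. set (G := fun i => if Nat.eq_dec i k then 1 else f i).
 assert (HG : forall i, (1 <= i <= N)%nat -> 0 <= G i <= 1).
 { intros i Hi; unfold G; destruct (Nat.eq_dec i k); [lra|auto]. }
 assert (Hn : forall n, (n <= N0)%nat -> ((k <= n)%nat -> prodR n G <= mu ^ (n - 1)) /\ ((n < k)%nat -> prodR n G <= mu ^ n)).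
 { induction n; intros Hn. simpl; split; intros; [lia|lra].
   destruct (IHn ltac:(lia)) as [I1 I2]. rewrite prodR_S.
   assert (P0 : 0 <= prodR n G) by (apply prodR_01; intros; apply HG; lia).
   destruct (HG (S n) ltac:(lia)) as [G0 G1].
   split; intros Hk'.
   - destruct (Nat.eq_dec (S n) k).
     + subst k. unfold G at 2. destruct (Nat.eq_dec (S n) (S n)); [|lia]. rewrite Rmult_1_r.
       replace (S n - 1)%nat with n by lia. apply I2; lia.
     + assert (G (S n) <= mu). { unfold G. destruct (Nat.eq_dec (S n) k); [lia|]. apply Hfm; lia. }
       replace (S n - 1)%nat with (S (n - 1)) by lia. simpl.
       specialize (I1 ltac:(lia)). rewrite Rmult_comm. apply Rmult_le_compat; auto.
   - assert (G (S n) <= mu). { unfold G. destruct (Nat.eq_dec (S n) k); [lia|]. apply Hfm; lia. }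
     simpl. specialize (I2 ltac:(lia)). rewrite Rmult_comm. apply Rmult_le_compat; auto. }
 assert (HN0 : prodR N0 G <= mu ^ (N0 - 1)).
 { destruct (Hn N0 (le_n _)) as [I1 I2]. destruct (le_lt_dec k N0). auto.
   apply Rle_trans with (mu ^ N0). auto. destruct N0. simpl; lra. replace (S N0 - 1)%nat with N0 by lia.
   simpl. assert (0 <= mu ^ N0) by (apply pow_le; lra). nra. }
 assert (HNN : forall n, (N0 <= n <= N)%nat -> prodR n G <= prodR N0 G).
 { intros n [H1 H2]. induction H1. lra. rewrite prodR_S. destruct (HG (S m) ltac:(lia)).
   assert (0 <= prodR m G) by (apply prodR_01; intros; apply HG; lia). specialize (IHle ltac:(lia)). nra. }
 apply Rle_trans with (prodR N0 G); [apply HNN; lia|exact HN0]. Qed.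

Lemma fin_max (a : nat -> R) N : exists b, 0 < b /\ forall i, (1 <= i <= N)%nat -> a i <= b.
Proof. induction N. exists 1; split; [lra|intros; lia]. destruct IHN as [b [Hb H]].
 exists (Rmax b (a (S N))). split. apply Rlt_le_trans with b; auto; apply Rmax_l.
 intros i Hi. destruct (Nat.eq_dec i (S N)). subst; apply Rmax_r. apply Rle_trans with b; [apply H; lia|apply Rmax_l]. Qed.

Lemma pow_le1 t p : 0 <= t <= 1 -> t ^ p <= 1.
Proof. intros H. rewrite <- (pow1 p). apply pow_incr; lra. Qed.

Lemma cR_mult (f g : R -> R) x : continuous f x -> continuous g x -> continuous (fun t => f t * g t) x.
Proof. intros; apply (continuous_mult f g); auto. Qed.
Lemma cR_plus (f g : R -> R) x : continuous f x -> continuous g x -> continuous (fun t => f t + g t) x.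
Proof. intros; apply (continuous_plus f g); auto. Qed.
Lemma cR_opp (f : R -> R) x : continuous f x -> continuous (fun t => - f t) x.
Proof. intros; apply (continuous_opp f); auto. Qed.
Lemma cR_minus (f g : R -> R) x : continuous f x -> continuous g x -> continuous (fun t => f t - g t) x.
Proof. intros; apply cR_plus; auto; apply cR_opp; auto. Qed.
Lemma cR_const (k : R) x : continuous (fun _ : R => k) x.
Proof. apply continuous_const. Qed.
Lemma cR_id x : continuous (fun t : R => t) x.
Proof. apply continuous_id. Qed.
Lemma cR_exp (f : R -> R) x : continuous f x -> continuous (fun t => exp (f t)) x.
Proof. intros; apply continuous_exp_comp; auto. Qed.
Lemma cR_pow (f : R -> R) n x : continuous f x -> continuous (fun t => f t ^ n) x.
Proof. intros H. induction n. simpl; apply cR_const. simpl. apply cR_mult; auto. Qed.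
Lemma cR_div (f : R -> R) (k : R) x : continuous f x -> continuous (fun t => f t / k) x.
Proof. intros; apply cR_mult; auto; apply cR_const. Qed.
Lemma cR_sumR (f : nat -> R -> R) n x : (forall k, continuous (f k) x) -> continuous (fun t => sumR n (fun k => f k t)) x.
Proof. intros H. induction n. simpl; apply cR_const. simpl. apply cR_plus; auto. Qed.
Lemma cR_prodR (f : nat -> R -> R) n x : (forall k, continuous (f k) x) -> continuous (fun t => prodR n (fun k => f k t)) x.
Proof. intros H. induction n. simpl; apply cR_const. simpl. apply cR_mult; auto. Qed.

Lemma abs3 A B C : Rabs (A + B - C) <= Rabs A + Rabs B + Rabs C.
Proof. unfold Rminus. eapply Rle_trans. apply Rabs_triang. rewrite Rabs_Ropp. pose proof (Rabs_triang A B). lra. Qed.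

Lemma unif_cont (f : nat -> R -> R) (g : R -> R) x0 r : 0 < r -> (forall n, continuous (f n) x0) ->
  (forall eps, 0 < eps -> exists n, forall y, Rabs (y - x0) < r -> Rabs (g y - f n y) <= eps) ->
  continuous g x0.
Proof. intros Hr Hf Hu. apply continuity_pt_filterlim.
 unfold continuity_pt, continue_in, limit1_in, limit_in. simpl. unfold R_dist. intros eps He.
 destruct (Hu (eps / 3) ltac:(lra)) as [n Hn].
 assert (Hc := proj2 (continuity_pt_filterlim (f n) x0) (Hf n)).
 unfold continuity_pt, continue_in, limit1_in, limit_in in Hc. simpl in Hc. unfold R_dist in Hc.
 destruct (Hc (eps / 3) ltac:(lra)) as [al [Hal Hal2]].
 exists (Rmin al r). split. apply Rmin_glb_lt; lra. intros x [Hd Hx].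
 assert (Hx1 : Rabs (x - x0) < al) by (eapply Rlt_le_trans; [exact Hx|apply Rmin_l]).
 assert (Hx2 : Rabs (x - x0) < r) by (eapply Rlt_le_trans; [exact Hx|apply Rmin_r]).
 specialize (Hal2 x (conj Hd Hx1)). pose proof (Hn x Hx2). pose proof (Hn x0 ltac:(rewrite Rminus_diag, Rabs_R0; lra)).
 replace (g x - g x0) with ((g x - f n x) + (f n x - f n x0) - (g x0 - f n x0)) by ring.
 pose proof (abs3 (g x - f n x) (f n x - f n x0) (g x0 - f n x0)). lra. Qed.

Lemma chasles (f : R -> R) u v w : ex_RInt f u v -> ex_RInt f v w -> RInt f u v + RInt f v w = RInt f u w.
Proof. intros H1 H2. apply (RInt_Chasles f u v w H1 H2). Qed.

Lemma RInt_nonneg (f : R -> R) u v : u <= v -> ex_RInt f u v -> (forall x, u < x < v -> 0 <= f x) -> 0 <= RInt f u v.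
Proof. intros; apply RInt_ge_0; auto. Qed.

Lemma RInt_le_const (f : R -> R) u v M : u <= v -> ex_RInt f u v -> (forall x, u < x < v -> f x <= M) ->
  RInt f u v <= M * (v - u).
Proof. intros H1 H2 H3. apply Rle_trans with (RInt (fun _ => M) u v). apply RInt_le; auto.
 apply ex_RInt_const. rewrite RInt_const. unfold scal; simpl; unfold mult; simpl. lra. Qed.

Lemma RInt_expdecay B k u v : 0 < k -> RInt (fun t => B * exp (- (k * t))) u v = B / k * (exp (- (k * u)) - exp (- (k * v))).
Proof. intros Hk. apply is_RInt_unique.
 assert (H := is_RInt_derive (fun t => - (B / k) * exp (- (k * t))) (fun t => B * exp (- (k * t))) u v).
 replace (B / k * (exp (- (k * u)) - exp (- (k * v)))) with (minus (- (B / k) * exp (- (k * v))) (- (B / k) * exp (- (k * u)))).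
 apply H. intros x _. auto_derive; auto. field; lra.
 intros x _. apply cR_mult. apply cR_const. apply cR_exp, cR_opp, cR_mult; [apply cR_const|apply cR_id].
 unfold minus, plus, opp; simpl. field; lra. Qed.

Lemma imp0 (f : R -> R) (tau : R -> R) T1 :
  (forall u v, ex_RInt f u v) -> (forall t, 0 <= t -> 0 <= f t) -> 0 <= T1 ->
  (forall T T', T1 <= T -> T <= T' -> RInt f T T' <= tau T) ->
  (forall eps, 0 < eps -> exists T, T1 <= T /\ tau T < eps) ->
  exists l, improper_int0 f l /\ forall T, T1 <= T -> RInt f 0 T <= l <= RInt f 0 T + tau T.
Proof. intros Hex Hnn HT1 Htail Htau.
 assert (Htau0 : forall T, T1 <= T -> 0 <= tau T).
 { intros T HT. pose proof (Htail T T HT (Rle_refl _)). rewrite RInt_point in H. exact H. }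
 assert (Hmono : forall T T', 0 <= T -> T <= T' -> RInt f 0 T <= RInt f 0 T').
 { intros T T' H1 H2. rewrite <- (chasles f 0 T T') by apply Hex.
   assert (0 <= RInt f T T') by (apply RInt_nonneg; auto; intros; apply Hnn; lra). lra. }
 assert (Hub : forall T, T1 <= T -> forall T'', 0 <= T'' -> RInt f 0 T'' <= RInt f 0 T + tau T).
 { intros T HT T'' H''. destruct (Rle_dec T'' T).
   - pose proof (Hmono T'' T H'' r). pose proof (Htau0 T HT). lra.
   - rewrite <- (chasles f 0 T T'') by apply Hex. pose proof (Htail T T'' HT ltac:(lra)). lra. }
 set (E := fun x => exists T, 0 <= T /\ x = RInt f 0 T).
 destruct (completeness E) as [l [Hl1 Hl2]].
 { exists (RInt f 0 T1 + tau T1). intros x [T [HT ->]]. apply Hub; lra. }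
 { exists (RInt f 0 0). exists 0. split; [lra|auto]. }
 assert (Hprop : forall T, T1 <= T -> RInt f 0 T <= l <= RInt f 0 T + tau T).
 { intros T HT. split. apply Hl1. exists T; split; auto; lra.
   apply Hl2. intros x [T'' [H'' ->]]. apply Hub; auto. }
 exists l. split; auto. split.
 - intros T HT. constructor. apply ex_RInt_Reals_0. apply Hex.
 - intros eps He. destruct (Htau eps He) as [T0 [HT0 HT0e]]. exists T0. intros T pr HT.
   rewrite <- RInt_Reals. destruct (Hprop T ltac:(lra)). destruct (Hprop T0 HT0).
   pose proof (Hmono T0 T ltac:(lra) HT). rewrite Rabs_left1 by lra. lra. Qed.

Lemma exp_neg_le x : 0 < x -> exp (- x) <= 1 / x.
Proof. intros Hx. rewrite exp_Ropp. pose proof (exp_ineq1_le x). pose proof (exp_pos x).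
 unfold Rdiv; rewrite Rmult_1_l. apply Rinv_le_contravar; lra. Qed.

Lemma RInt_diff_le (f g : R -> R) u v M : u <= v -> ex_RInt f u v -> ex_RInt g u v ->
  (forall t, u <= t <= v -> Rabs (f t - g t) <= M) -> Rabs (RInt f u v - RInt g u v) <= (v - u) * M.
Proof. intros H1 H2 H3 H4. assert (E := RInt_minus f g u v H2 H3).
 unfold minus, plus, opp in E; simpl in E. unfold Rminus at 1. rewrite <- E.
 apply abs_RInt_le_const; auto. apply (ex_RInt_minus f g u v H2 H3). Qed.

Lemma neg_ln_le v : 1 / 2 <= v < 1 -> - ln v <= 2 * (1 - v).
Proof. intros Hv. set (y := - ln v). assert (Hv' : v = exp (- y)) by (unfold y; rewrite Ropp_involutive, exp_ln; lra).
 pose proof (exp_ineq1_le y). rewrite exp_Ropp in Hv'. assert (0 < exp y) by apply exp_pos.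
 assert (exp y = / v) by (rewrite Hv', Rinv_inv; auto). rewrite H1 in H.
 assert (y <= / v - 1) by lra. assert (/ v - 1 = (1 - v) / v) by (field; lra).
 assert ((1 - v) / v <= 2 * (1 - v)). { apply (Rmult_le_reg_r v). lra. unfold Rdiv; rewrite Rmult_assoc, Rinv_l by lra. nra. }
 lra. Qed.

Section Big.
Variable a : nat -> R.
Variable j : nat.
Hypothesis Hpos : forall k, (1 <= k)%nat -> 0 < a k.
Hypothesis Hgr : exists C nu M, 0 < nu /\ 0 < M /\
     forall m, M <= m -> forall n, Astar_upto a n m <= C * Rpower m nu.
Variable c : R.
Hypothesis Hc : 0 < c.
Hypothesis Hca : forall k, (1 <= k)%nat -> c <= a k.

Hypothesis Hj : (2 <= j)%nat.

Definition termL t k := a k ^ j * rpow (exp (- t)) (a k) / (1 - rpow (exp (- t)) (a k)).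
Definition Ln t n := sumR n (termL t).
Definition Fn t n := prodR n (fun k => 1 - rpow (exp (- t)) (a k)).
Definition kap d := 1 / (1 - exp (- (c * d))).

Lemma kap_pos d : 0 < d -> 0 < kap d.
Proof. intros Hd. unfold kap. assert (exp (- (c*d)) < 1). { rewrite <- exp_0. apply exp_increasing.
 assert (0 < c * d) by (apply Rmult_lt_0_compat; lra). lra. } apply Rdiv_lt_0_compat; lra. Qed.

Lemma e_bounds d t k : 0 < d -> d <= t -> (1 <= k)%nat ->
  0 < rpow (exp (- t)) (a k) <= exp (- (a k * d)) /\ exp (- (a k * d)) <= exp (- (c * d)) /\ exp (- (c * d)) < 1.
Proof. intros Hd Ht Hk. rewrite rpow_exp. pose proof (Hpos k Hk). pose proof (Hca k Hk).
 split; [split|split]. apply exp_pos. apply exp_le_inc. apply Ropp_le_contravar, Rmult_le_compat_l; lra.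
 apply exp_le_inc. apply Ropp_le_contravar, Rmult_le_compat_r; lra.
 rewrite <- exp_0. apply exp_increasing. assert (0 < c * d) by (apply Rmult_lt_0_compat; lra). lra. Qed.

Lemma termL_bounds d t k : 0 < d -> d <= t -> (1 <= k)%nat -> 0 <= termL t k <= kap d * w a j d k.
Proof. intros Hd Ht Hk. destruct (e_bounds d t k Hd Ht Hk) as [[E1 E2] [E3 E4]].
 unfold termL, kap, w. set (e := rpow (exp (- t)) (a k)) in *. pose proof (Hpos k Hk).
 assert (0 <= a k ^ j) by (apply pow_le; lra).
 split. apply Rmult_le_pos. apply Rmult_le_pos; lra. left; apply Rinv_0_lt_compat; lra.
 set (f := exp (- (a k * d))) in *. set (g := exp (- (c * d))) in *.
 unfold Rdiv. apply Rle_trans with (a k ^ j * f * / (1 - g)).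
 apply Rmult_le_compat. apply Rmult_le_pos; lra. left; apply Rinv_0_lt_compat; lra.
 apply Rmult_le_compat_l; lra. apply Rinv_le_contravar; lra.
 assert (0 < / (1 - g)) by (apply Rinv_0_lt_compat; lra). nra. Qed.

Lemma Ln_diff d t n m : 0 < d -> d <= t -> (n <= m)%nat ->
  0 <= Ln t m - Ln t n <= kap d * (Sn a j d m - Sn a j d n).
Proof. intros Hd Ht H; induction H. lra. unfold Ln, Sn in *. rewrite !sumR_S.
 pose proof (termL_bounds d t (S m) Hd Ht ltac:(lia)). lra. Qed.

Lemma Fn_01 t n : 0 < t -> 0 <= Fn t n <= 1.
Proof. intros Ht. unfold Fn. apply prodR_01. intros k Hk. destruct (e_bounds t t k Ht (Rle_refl _) ltac:(lia)) as [[A B] [C D]]. lra. Qed.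

Lemma Fn_diff d t n m : 0 < d -> d <= t -> (n <= m)%nat ->
  0 <= Fn t n - Fn t m <= Sn a j d m - Sn a j d n.
Proof. intros Hd Ht H; induction H. lra. unfold Fn, Sn in *. rewrite prodR_S, sumR_S.
 destruct (e_bounds d t (S m) Hd Ht ltac:(lia)) as [[A B] [C D]].
 pose proof (Fn_01 t m ltac:(lra)). unfold Fn in H0.
 assert (exp (- (a (S m) * d)) <= w a j d (S m)).
 { unfold w. pose proof (Hpos (S m) ltac:(lia)). assert (0 <= a (S m) ^ j) by (apply pow_le; lra).
   pose proof (exp_pos (- (a (S m) * d))). nra. }
 set (P := prodR m (fun k => 1 - rpow (exp (- t)) (a k))) in *. set (e := rpow (exp (- t)) (a (S m))) in *.
 split; nra. Qed.

Lemma L_cv t : 0 < t -> Un_cv (Ln t) (Lfun a (exp (- t)) j).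
Proof. intros Ht. destruct (Sn_cv a j Hpos Hgr t Ht) as [SS [HS HSb]].
 destruct (growing_cv (Ln t)) as [l Hl].
 - intros n. pose proof (Ln_diff t t n (S n) Ht (Rle_refl _) ltac:(lia)). lra.
 - exists (kap t * SS). intros x [n ->]. pose proof (Ln_diff t t 0 n Ht (Rle_refl _) ltac:(lia)).
   unfold Ln, Sn in *; simpl in *. pose proof (HSb n). pose proof (kap_pos t Ht). unfold Sn in *. nra.
 - unfold Lfun. rewrite (seq_lim_eq _ l). auto. exact Hl. Qed.

Lemma F_cv t : 0 < t -> Un_cv (Fn t) (Ffun a (exp (- t))).
Proof. intros Ht. destruct (decreasing_cv (Fn t)) as [l Hl].
 - intros n. pose proof (Fn_diff t t n (S n) Ht (Rle_refl _) ltac:(lia)). lra.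
 - exists 0. intros x [n ->]. unfold opp_seq. pose proof (Fn_01 t n Ht). lra.
 - unfold Ffun. rewrite (seq_lim_eq _ l). auto. exact Hl. Qed.

Lemma LF_unif d : 0 < d -> forall eps, 0 < eps -> exists N, forall n t, (N <= n)%nat -> d <= t ->
  0 <= Lfun a (exp (- t)) j - Ln t n <= eps /\ 0 <= Fn t n - Ffun a (exp (- t)) <= eps.
Proof. intros Hd eps He. pose proof (kap_pos d Hd).
 destruct (Sn_tail a j Hpos Hgr d Hd (Rmin eps (eps / kap d))) as [N HN].
 apply Rmin_glb_lt; auto. apply Rdiv_lt_0_compat; auto.
 exists N. intros n t Hn Ht. assert (Ht0 : 0 < t) by lra. split; split.
 - assert (Ln t n <= Lfun a (exp (- t)) j); [|lra].
   apply (cv_ge _ _ n _ (L_cv t Ht0)). intros m Hm. pose proof (Ln_diff d t n m Hd Ht Hm). lra.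
 - assert (Lfun a (exp (- t)) j <= Ln t n + eps); [|lra].
   apply (cv_le _ _ n _ (L_cv t Ht0)). intros m Hm. pose proof (Ln_diff d t n m Hd Ht Hm).
   pose proof (HN n m Hn Hm). pose proof (Rmin_r eps (eps / kap d)).
   assert (HH : kap d * (Sn a j d m - Sn a j d n) <= kap d * (eps / kap d)) by (apply Rmult_le_compat_l; lra).
   replace (kap d * (eps / kap d)) with eps in HH by (field; lra). lra.
 - assert (Ffun a (exp (- t)) <= Fn t n); [|lra].
   apply (cv_le _ _ n _ (F_cv t Ht0)). intros m Hm. pose proof (Fn_diff d t n m Hd Ht Hm). lra.
 - assert (Fn t n - eps <= Ffun a (exp (- t))); [|lra].
   apply (cv_ge _ _ n _ (F_cv t Ht0)). intros m Hm. pose proof (Fn_diff d t n m Hd Ht Hm).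
   pose proof (HN n m Hn Hm). pose proof (Rmin_l eps (eps / kap d)). lra. Qed.

Lemma Ffun_01 t : 0 < t -> 0 <= Ffun a (exp (- t)) <= 1.
Proof. intros Ht. split. apply (cv_ge _ _ 0 _ (F_cv t Ht)). intros m _; apply Fn_01; auto.
 apply (cv_le _ _ 0 _ (F_cv t Ht)). intros m _; apply Fn_01; auto. Qed.

Lemma Lfun_bound d : 0 < d -> exists B, forall t, d <= t -> 0 <= Lfun a (exp (- t)) j <= B /\
   forall n, 0 <= Ln t n <= B.
Proof. intros Hd. destruct (Sn_cv a j Hpos Hgr d Hd) as [SS [HS HSb]]. pose proof (kap_pos d Hd).
 assert (Hb : forall t n, d <= t -> 0 <= Ln t n <= kap d * SS).
 { intros t n Ht. pose proof (Ln_diff d t 0 n Hd Ht ltac:(lia)). unfold Ln, Sn in *; simpl in *.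
   pose proof (HSb n). unfold Sn in *.
   assert (kap d * sumR n (w a j d) <= kap d * SS) by (apply Rmult_le_compat_l; lra). lra. }
 exists (kap d * SS). intros t Ht. split; auto. split.
 apply (cv_ge _ _ 0 _ (L_cv t ltac:(lra))). intros; apply Hb; auto.
 apply (cv_le _ _ 0 _ (L_cv t ltac:(lra))). intros; apply Hb; auto. Qed.

Definition fj := INR (fact (j - 1)).
Lemma fj_pos : 0 < fj.
Proof. apply INR_fact_lt_0. Qed.

Definition Gt t := I_integrand a j (exp (- t)) * exp (- t).

Lemma EU_eq N t : 0 < t -> EU_integrand a N j t = t ^ (j - 1) / fj * Ln t N * Fn t N.
Proof. intros Ht. unfold EU_integrand, Ln. rewrite Rmult_assoc, (Rmult_comm (sumR _ _)), <- Rmult_assoc.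
 rewrite <- sumR_scal. apply sumR_ext. intros k Hk.
 destruct (e_bounds t t k Ht (Rle_refl _) ltac:(lia)) as [[E1 E2] [E3 E4]].
 unfold Fn. rewrite <- (prodR_except N (fun i => 1 - rpow (exp (- t)) (a i)) k Hk).
 rewrite (prodR_ext N (fun i => if Nat.eq_dec i k then 1 else 1 - rpow (exp (- t)) (a i))
            (fun i => if Nat.eq_dec i k then 1 else 1 - exp (- (a i * t)))).
 2:{ intros i _. destruct (Nat.eq_dec i k); auto. rewrite rpow_exp; auto. }
 unfold termL. rewrite rpow_exp in *. set (e := exp (- (a k * t))) in *.
 set (P := prodR N _). unfold fj. destruct j as [|j']; [lia|]. replace (S j' - 1)%nat with j' by lia.
 simpl. rewrite Rpow_mult_distr.
 pose proof (INR_fact_lt_0 j'). field. split; lra. Qed.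

Lemma G_eq t : 0 < t -> Gt t = t ^ (j - 1) / fj * Lfun a (exp (- t)) j * Ffun a (exp (- t)).
Proof. intros Ht. unfold Gt, I_integrand. rewrite ln_exp. rewrite Rabs_Ropp, Rabs_pos_eq by lra.
 unfold fj. pose proof (exp_pos (- t)). pose proof (INR_fact_lt_0 (j - 1)). field. split; lra. Qed.

Lemma prod_factor_01 N t : 0 <= t -> forall k, (1 <= k <= N)%nat ->
  0 <= prodR N (fun i => if Nat.eq_dec i k then 1 else 1 - exp (- (a i * t))) <= 1.
Proof. intros Ht k Hk. apply prodR_01. intros i Hi. destruct (Nat.eq_dec i k). lra.
 pose proof (Hpos i ltac:(lia)). assert (exp (- (a i * t)) <= 1).
 { rewrite <- exp_0. apply exp_le_inc. assert (0 <= a i * t) by (apply Rmult_le_pos; lra). lra. }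
 pose proof (exp_pos (- (a i * t))). lra. Qed.

Lemma EU_le N t Q : 0 <= t -> 0 <= Q ->
  (forall k, (1 <= k <= N)%nat -> prodR N (fun i => if Nat.eq_dec i k then 1 else 1 - exp (- (a i * t))) <= Q) ->
  0 <= EU_integrand a N j t <= Q * (t ^ (j - 1) / fj) * sumR N (fun k => (a k ^ j + 1) * exp (- (a k * t))).
Proof. intros Ht HQ HP. unfold EU_integrand. rewrite <- sumR_scal. split.
 - apply sumR_nonneg. intros k Hk. pose proof (prod_factor_01 N t Ht k Hk). pose proof (Hpos k ltac:(lia)).
   apply Rmult_le_pos; [|lra]. unfold Rdiv. repeat apply Rmult_le_pos; try lra. left; apply exp_pos.
   apply pow_le; apply Rmult_le_pos; lra. left; apply Rinv_0_lt_compat, INR_fact_lt_0.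
 - apply sumR_le. intros k Hk. pose proof (prod_factor_01 N t Ht k Hk). pose proof (Hpos k ltac:(lia)).
   specialize (HP k Hk). set (P := prodR N _) in *. pose proof (exp_pos (- (a k * t))).
   set (e := exp (- (a k * t))) in *. fold fj. pose proof fj_pos.
   rewrite Rpow_mult_distr. replace (a k ^ j) with (a k * a k ^ (j - 1)) by (rewrite tech_pow_Rmult; f_equal; lia).
   assert (0 <= a k ^ (j - 1)) by (apply pow_le; lra). assert (0 <= t ^ (j - 1)) by (apply pow_le; lra).
   set (A := a k ^ (j - 1)) in *. set (T := t ^ (j - 1)) in *.
   assert (0 <= a k * e * (A * T) / fj). { unfold Rdiv. repeat apply Rmult_le_pos; try lra. left; apply Rinv_0_lt_compat; lra. }
   apply Rle_trans with (a k * e * (A * T) / fj * Q). apply Rmult_le_compat_l; lra.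
   assert (HE : a k * e * (A * T) / fj * Q = Q * (T / fj) * (a k * A * e)) by (field; lra). rewrite HE.
   apply Rmult_le_compat_l. apply Rmult_le_pos; auto. unfold Rdiv; apply Rmult_le_pos; auto; left; apply Rinv_0_lt_compat; lra.
   assert (0 <= a k * A) by (apply Rmult_le_pos; lra). nra. Qed.

Lemma EU_nonneg N t : 0 <= t -> 0 <= EU_integrand a N j t.
Proof. intros Ht. apply (EU_le N t 1 Ht ltac:(lra)). intros k Hk. apply (prod_factor_01 N t Ht k Hk). Qed.

Lemma D1 : exists B1, 0 <= B1 /\ forall N t, 1 <= t -> EU_integrand a N j t <= B1 * exp (- (c / 2 * t)).
Proof. destruct (GS a Hpos Hgr j) as (K & q & HK & HGS).
 set (p := (j - 1)%nat).
 exists (INR p ^ p * (2 / c) ^ p * exp c * K / fj). split.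
 { pose proof (fj_pos). assert (0 <= INR p ^ p) by (apply pow_le, pos_INR).
   assert (0 <= (2 / c) ^ p) by (apply pow_le; left; apply Rdiv_lt_0_compat; lra).
   pose proof (exp_pos c). assert (0 < / fj) by (apply Rinv_0_lt_compat; auto).
   unfold Rdiv at 2. repeat apply Rmult_le_pos; lra. }
 intros N t Ht. destruct (EU_le N t 1 ltac:(lra) ltac:(lra)) as [_ H].
 { intros k Hk. apply (prod_factor_01 N t ltac:(lra) k Hk). }
 eapply Rle_trans; [exact H|]. rewrite Rmult_1_l.
 assert (HS : sumR N (fun k => (a k ^ j + 1) * exp (- (a k * t))) <= exp (- (c * (t - 1))) * K).
 { apply Rle_trans with (exp (- (c * (t - 1))) * sumR N (fun k => (a k ^ j + 1) * exp (- (a k * 1)))).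
   rewrite <- sumR_scal. apply sumR_le. intros k Hk. pose proof (Hpos k ltac:(lia)). pose proof (Hca k ltac:(lia)).
   assert (0 <= a k ^ j) by (apply pow_le; lra).
   assert (exp (- (a k * t)) <= exp (- (c * (t - 1))) * exp (- (a k * 1))).
   { rewrite <- exp_plus. apply exp_le_inc. nra. }
   nra. apply Rmult_le_compat_l. left; apply exp_pos. specialize (HGS 1 ltac:(lra) N). rewrite pow1 in HGS. lra. }
 assert (HT : t ^ p <= INR p ^ p * (2 / c) ^ p * exp (c / 2 * t)).
 { assert (HH := pow_le_exp p (c / 2 * t) ltac:(apply Rmult_le_pos; lra)).
   replace t with ((c / 2 * t) * (2 / c)) at 1 by (field; lra). rewrite Rpow_mult_distr.
   assert (0 < (2/c)^p) by (apply pow_lt; apply Rdiv_lt_0_compat; lra). nra. }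
 fold p. pose proof (fj_pos). assert (0 <= t ^ p) by (apply pow_le; lra).
 apply Rle_trans with (t ^ p / fj * (exp (- (c * (t - 1))) * K)).
 apply Rmult_le_compat_l; auto. unfold Rdiv; apply Rmult_le_pos; auto; left; apply Rinv_0_lt_compat; auto.
 assert (HE : exp (- (c * (t - 1))) = exp c * exp (- (c * t))) by (rewrite <- exp_plus; f_equal; ring).
 assert (HE2 : exp (c / 2 * t) * exp (- (c * t)) = exp (- (c / 2 * t))) by (rewrite <- exp_plus; f_equal; field).
 rewrite HE. pose proof (exp_pos c). pose proof (exp_pos (- (c * t))).
 apply Rle_trans with (INR p ^ p * (2 / c) ^ p * exp (c / 2 * t) / fj * (exp c * exp (- (c * t)) * K)).
 apply Rmult_le_compat_r. repeat apply Rmult_le_pos; lra. unfold Rdiv; apply Rmult_le_compat_r; auto. left; apply Rinv_0_lt_compat; auto.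
 rewrite <- HE2. right; field; lra. Qed.

Lemma D0 : exists N0 B0, 0 <= B0 /\ forall N t, (N0 <= N)%nat -> 0 < t <= 1 -> EU_integrand a N j t <= B0.
Proof. destruct (GS a Hpos Hgr j) as (K & q & HK & HGS).
 destruct (fin_max a (S q)) as [b [Hb Hab]].
 exists (S q), (b ^ q * K / fj). pose proof (fj_pos). split.
 { unfold Rdiv. apply Rmult_le_pos. apply Rmult_le_pos. apply pow_le; lra. lra. left; apply Rinv_0_lt_compat; auto. }
 intros N t HN Ht. assert (0 <= b * t) by (apply Rmult_le_pos; lra).
 destruct (EU_le N t ((b * t) ^ q) ltac:(lra) ltac:(apply pow_le; lra)) as [_ HEU].
 { intros k Hk. destruct (Rle_dec (b * t) 1).
   - assert (PS := prod_small N (S q) k (b * t) (fun i => 1 - exp (- (a i * t)))).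
     replace (S q - 1)%nat with q in PS by lia. apply PS; try lra; try lia.
     intros i Hi. pose proof (Hpos i ltac:(lia)). assert (exp (- (a i * t)) <= 1).
     { rewrite <- exp_0. apply exp_le_inc. assert (0 <= a i * t) by (apply Rmult_le_pos; lra). lra. }
     pose proof (exp_pos (- (a i * t))). lra.
     intros i Hi. pose proof (exp_ineq1_le (- (a i * t))). pose proof (Hab i Hi). nra.
   - apply Rle_trans with 1. apply (prod_factor_01 N t ltac:(lra) k Hk). apply pow_R1_Rle; lra. }
 eapply Rle_trans; [exact HEU|]. specialize (HGS t Ht N).
 assert (0 < t ^ q) by (apply pow_lt; lra).
 assert (HT : t ^ (j - 1) <= 1) by (apply pow_le1; lra). assert (0 <= t ^ (j - 1)) by (apply pow_le; lra).
 rewrite Rpow_mult_distr.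
 apply Rle_trans with (b ^ q * t ^ q * (t ^ (j - 1) / fj) * (K / t ^ q)).
 apply Rmult_le_compat_l; auto. apply Rmult_le_pos. apply Rmult_le_pos; [apply pow_le|]; lra.
 unfold Rdiv; apply Rmult_le_pos; auto; left; apply Rinv_0_lt_compat; auto.
 replace (b ^ q * t ^ q * (t ^ (j - 1) / fj) * (K / t ^ q)) with (b ^ q * K / fj * t ^ (j - 1)) by (field; lra).
 assert (0 <= b ^ q * K / fj). { unfold Rdiv. apply Rmult_le_pos. apply Rmult_le_pos. apply pow_le; lra. lra. left; apply Rinv_0_lt_compat; auto. }
 nra. Qed.

Lemma G_unif d T : 0 < d -> forall eps, 0 < eps -> exists N, forall n t, (N <= n)%nat -> d <= t <= T ->
  Rabs (Gt t - EU_integrand a n j t) <= eps.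
Proof. intros Hd eps He. destruct (Lfun_bound d Hd) as [B HB].
 assert (HB0 : 0 <= B). { destruct (HB d (Rle_refl _)) as [[X Y] _]. lra. }
 pose proof (fj_pos). set (p := (j - 1)%nat).
 assert (HTp : 0 <= Rabs T ^ p) by (apply pow_le, Rabs_pos).
 set (eta := eps * fj / ((1 + B) * (Rabs T ^ p + 1))).
 assert (Heta : 0 < eta). { unfold eta. apply Rdiv_lt_0_compat. apply Rmult_lt_0_compat; lra. apply Rmult_lt_0_compat; lra. }
 destruct (LF_unif d Hd eta Heta) as [N HN].
 exists N. intros n t Hn Ht. destruct (HN n t Hn ltac:(lra)) as [[L1 L2] [F1 F2]].
 destruct (HB t ltac:(lra)) as [[L3 L4] L5]. specialize (L5 n). pose proof (Ffun_01 t ltac:(lra)).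
 pose proof (Fn_01 t n ltac:(lra)).
 rewrite G_eq, EU_eq by (auto; lra). fold p.
 set (L := Lfun a (exp (- t)) j) in *. set (F := Ffun a (exp (- t))) in *.
 set (L' := Ln t n) in *. set (F' := Fn t n) in *.
 replace (t ^ p / fj * L * F - t ^ p / fj * L' * F') with (t ^ p / fj * ((L - L') * F + L' * (F - F'))) by ring.
 assert (Htp : 0 <= t ^ p <= Rabs T ^ p). { split. apply pow_le; lra. apply pow_incr. split; [lra|]. apply Rle_trans with T; [lra|apply Rle_abs]. }
 assert (HX : Rabs ((L - L') * F + L' * (F - F')) <= eta * (1 + B)).
 { eapply Rle_trans; [apply Rabs_triang|]. rewrite !Rabs_mult.
   rewrite (Rabs_pos_eq (L - L')), (Rabs_pos_eq F), (Rabs_pos_eq L') by lra.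
   rewrite Rabs_minus_sym, Rabs_pos_eq by lra.
   assert ((L - L') * F <= eta * 1) by (apply Rmult_le_compat; lra).
   assert (L' * (F' - F) <= B * eta) by (apply Rmult_le_compat; lra). lra. }
 rewrite Rabs_mult. rewrite (Rabs_pos_eq (t ^ p / fj)) by (unfold Rdiv; apply Rmult_le_pos; [lra|left; apply Rinv_0_lt_compat; auto]).
 apply Rle_trans with (Rabs T ^ p / fj * (eta * (1 + B))).
 apply Rmult_le_compat. unfold Rdiv; apply Rmult_le_pos; [lra|left; apply Rinv_0_lt_compat; auto]. apply Rabs_pos.
 unfold Rdiv; apply Rmult_le_compat_r; [left; apply Rinv_0_lt_compat; auto|lra]. auto.
 unfold eta. apply Rle_trans with (eps * (Rabs T ^ p / (Rabs T ^ p + 1))). right; field; lra.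
 rewrite <- (Rmult_1_r eps) at 2. apply Rmult_le_compat_l; [lra|].
 apply (Rmult_le_reg_r (Rabs T ^ p + 1)); [lra|]. unfold Rdiv; rewrite Rmult_assoc, Rinv_l; lra. Qed.


Lemma EU_cont N t : continuous (EU_integrand a N j) t.
Proof. unfold EU_integrand. apply cR_sumR. intros k. apply cR_mult.
 apply cR_div. apply cR_mult. apply cR_mult. apply cR_const. apply cR_exp, cR_opp, cR_mult; [apply cR_const|apply cR_id].
 apply cR_pow, cR_mult; [apply cR_const|apply cR_id].
 apply cR_prodR. intros i. destruct (Nat.eq_dec i k). apply cR_const.
 apply cR_minus. apply cR_const. apply cR_exp, cR_opp, cR_mult; [apply cR_const|apply cR_id]. Qed.

Lemma Gt_cont t : 0 < t -> continuous Gt t.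
Proof. intros Ht. apply (unif_cont (fun n => EU_integrand a n j) Gt t (t / 2)). lra.
 intros; apply EU_cont. intros eps He. destruct (G_unif (t / 2) (3 * t / 2) ltac:(lra) eps He) as [N HN].
 exists N. intros y Hy. apply Rabs_def2 in Hy. apply HN; [lia|lra]. Qed.

Lemma EU_ex N u v : ex_RInt (EU_integrand a N j) u v.
Proof. apply (@ex_RInt_continuous R_CompleteNormedModule). intros; apply EU_cont. Qed.

Lemma Gt_ex u v : 0 < u -> 0 < v -> ex_RInt Gt u v.
Proof. intros Hu Hv. apply (@ex_RInt_continuous R_CompleteNormedModule). intros z Hz. apply Gt_cont.
 pose proof (Rmin_glb_lt u v 0 Hu Hv). lra. Qed.

Definition tauf (B1 T : R) := 2 * B1 / c * exp (- (c / 2 * T)).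

Lemma tau_mono B1 T T' : 0 <= B1 -> T <= T' -> tauf B1 T' <= tauf B1 T.
Proof. intros HB HT. unfold tauf. apply Rmult_le_compat_l. unfold Rdiv; apply Rmult_le_pos; [lra|left; apply Rinv_0_lt_compat; lra].
 apply exp_le_inc. apply Ropp_le_contravar. apply Rmult_le_compat_l; lra. Qed.

Lemma tau_nonneg B1 T : 0 <= B1 -> 0 <= tauf B1 T.
Proof. intros HB. unfold tauf. apply Rmult_le_pos. unfold Rdiv; apply Rmult_le_pos; [lra|left; apply Rinv_0_lt_compat; lra].
 left; apply exp_pos. Qed.

Lemma tau_small B1 : 0 <= B1 -> forall eps, 0 < eps -> exists T, 1 <= T /\ tauf B1 T < eps.
Proof. intros HB eps He. set (K := 2 * B1 / c).
 assert (HK : 0 <= K) by (unfold K, Rdiv; apply Rmult_le_pos; [lra|left; apply Rinv_0_lt_compat; lra]).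
 exists (1 + 2 / c * (K + 1) / eps). assert (0 < 2 / c * (K + 1) / eps).
 { apply Rdiv_lt_0_compat; auto. apply Rmult_lt_0_compat. apply Rdiv_lt_0_compat; lra. lra. }
 split. lra. unfold tauf. fold K. set (x := c / 2 * (1 + 2 / c * (K + 1) / eps)).
 assert (Hx : x = c / 2 + (K + 1) / eps) by (unfold x; field; lra).
 assert (0 < (K + 1) / eps) by (apply Rdiv_lt_0_compat; lra).
 assert (Hxp : 0 < x) by lra. pose proof (exp_neg_le x Hxp).
 apply Rle_lt_trans with (K * (1 / x)). apply Rmult_le_compat_l; auto.
 assert ((K + 1) / eps < x) by lra.
 apply Rle_lt_trans with ((K + 1) * (1 / x)). apply Rmult_le_compat_r. left; apply Rdiv_lt_0_compat; lra. lra.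
 replace ((K + 1) * (1 / x)) with ((K + 1) / x) by (field; lra).
 apply (Rmult_lt_reg_r x); auto. unfold Rdiv. rewrite Rmult_assoc, Rinv_l by lra.
 apply (Rmult_lt_reg_r (/ eps)). apply Rinv_0_lt_compat; lra. rewrite Rmult_1_r, (Rmult_comm eps), Rmult_assoc, Rinv_r by lra. lra. Qed.

Section WithB.
Variable B1 : R.
Hypothesis HB1 : 0 <= B1.
Hypothesis HD1 : forall N t, 1 <= t -> EU_integrand a N j t <= B1 * exp (- (c / 2 * t)).
Variable B0 : R.
Variable N0 : nat.
Hypothesis HB0 : 0 <= B0.
Hypothesis HD0 : forall N t, (N0 <= N)%nat -> 0 < t <= 1 -> EU_integrand a N j t <= B0.

Lemma decay_int (f : R -> R) T T' : 1 <= T -> T <= T' -> ex_RInt f T T' ->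
  (forall t, 1 <= t -> f t <= B1 * exp (- (c / 2 * t))) -> RInt f T T' <= tauf B1 T.
Proof. intros H1 H2 Hex Hf. apply Rle_trans with (RInt (fun t => B1 * exp (- (c / 2 * t))) T T').
 apply RInt_le; auto. apply (@ex_RInt_continuous R_CompleteNormedModule). intros; apply cR_mult. apply cR_const.
 apply cR_exp, cR_opp, cR_mult; [apply cR_const|apply cR_id]. intros; apply Hf; lra.
 rewrite RInt_expdecay by lra. unfold tauf. pose proof (exp_pos (- (c / 2 * T'))).
 replace (B1 / (c / 2)) with (2 * B1 / c) by (field; lra).
 apply Rmult_le_compat_l. unfold Rdiv; apply Rmult_le_pos; [lra|left; apply Rinv_0_lt_compat; lra]. lra. Qed.

Lemma E_ex N : exists l, improper_int0 (EU_integrand a N j) l /\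
  forall T, 1 <= T -> RInt (EU_integrand a N j) 0 T <= l <= RInt (EU_integrand a N j) 0 T + tauf B1 T.
Proof. apply imp0.
 - apply EU_ex.
 - apply EU_nonneg.
 - lra.
 - intros T T' H1 H2. apply decay_int; [lra|lra|apply EU_ex|]. intros; apply HD1; lra.
 - apply tau_small; auto. Qed.

Lemma Gt_le_lim t M : 0 < t -> (exists N1, forall n, (N1 <= n)%nat -> EU_integrand a n j t <= M) -> Gt t <= M.
Proof. intros Ht [N1 HN1]. apply Rnot_lt_le. intros Hc'.
 destruct (G_unif t t Ht ((Gt t - M) / 2) ltac:(lra)) as [N HN].
 specialize (HN (max N N1) t ltac:(lia) ltac:(lra)). specialize (HN1 (max N N1) ltac:(lia)).
 pose proof (Rle_abs (Gt t - EU_integrand a (Init.Nat.max N N1) j t)). lra. Qed.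

Lemma Gt_nonneg t : 0 < t -> 0 <= Gt t.
Proof. intros Ht. rewrite G_eq by auto. destruct (Lfun_bound t Ht) as [B HB]. destruct (HB t (Rle_refl _)) as [[L1 L2] _].
 pose proof (Ffun_01 t Ht). pose proof fj_pos. assert (0 <= t ^ (j - 1)) by (apply pow_le; lra).
 apply Rmult_le_pos; [apply Rmult_le_pos|]; try lra. unfold Rdiv; apply Rmult_le_pos; auto; left; apply Rinv_0_lt_compat; auto. Qed.

Lemma Gt_B0 t : 0 < t <= 1 -> Gt t <= B0.
Proof. intros Ht. apply Gt_le_lim. lra. exists N0. intros; apply HD0; auto. Qed.

Lemma Gt_B1 t : 1 <= t -> Gt t <= B1 * exp (- (c / 2 * t)).
Proof. intros Ht. apply Gt_le_lim. lra. exists 0%nat. intros; apply HD1; auto. Qed.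

Lemma I_ex : exists I, (forall d T, 0 < d -> d <= T -> RInt Gt d T <= I) /\
  (forall d T, 0 < d <= 1 -> 1 <= T -> I <= RInt Gt d T + B0 * d + tauf B1 T).
Proof.
 assert (Hext : forall m d' T' M, 0 < m -> m <= d' -> d' <= T' -> T' <= M -> RInt Gt d' T' <= RInt Gt m M).
 { intros m d' T' M H1 H2 H3 H4. rewrite <- (chasles Gt m d' M) by (apply Gt_ex; lra).
   rewrite <- (chasles Gt d' T' M) by (apply Gt_ex; lra).
   assert (0 <= RInt Gt m d') by (apply RInt_nonneg; auto; [apply Gt_ex; lra|intros; apply Gt_nonneg; lra]).
   assert (0 <= RInt Gt T' M) by (apply RInt_nonneg; auto; [apply Gt_ex; lra|intros; apply Gt_nonneg; lra]). lra. }
 assert (Hub : forall d T, 0 < d <= 1 -> 1 <= T -> forall d' T', 0 < d' -> d' <= T' ->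
     RInt Gt d' T' <= RInt Gt d T + B0 * d + tauf B1 T).
 { intros d T Hd HT d' T' Hd' HdT'. set (m := Rmin d d'). set (M := Rmax T T').
   assert (Hm : 0 < m <= d) by (unfold m; split; [apply Rmin_glb_lt; lra|apply Rmin_l]).
   assert (HM : T <= M) by (unfold M; apply Rmax_l).
   apply Rle_trans with (RInt Gt m M). apply Hext; [lra|unfold m; apply Rmin_r|lra|unfold M; apply Rmax_r].
   rewrite <- (chasles Gt m d M) by (apply Gt_ex; lra).
   rewrite <- (chasles Gt d T M) by (apply Gt_ex; lra).
   assert (RInt Gt m d <= B0 * (d - m)) by (apply RInt_le_const; [lra|apply Gt_ex; lra|intros; apply Gt_B0; lra]).
   assert (RInt Gt T M <= tauf B1 T) by (apply decay_int; [lra|lra|apply Gt_ex; lra|intros; apply Gt_B1; lra]).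
   assert (B0 * (d - m) <= B0 * d) by (apply Rmult_le_compat_l; lra). lra. }
 set (E := fun x => exists d T, 0 < d /\ d <= T /\ x = RInt Gt d T).
 destruct (completeness E) as [I [HI1 HI2]].
 { exists (RInt Gt 1 1 + B0 * 1 + tauf B1 1). intros x (d & T & H1 & H2 & ->). apply Hub; lra. }
 { exists (RInt Gt 1 1), 1, 1. repeat split; lra. }
 exists I. split.
 - intros d T Hd HT. apply HI1. exists d, T; auto.
 - intros d T Hd HT. apply HI2. intros x (d' & T' & H1 & H2 & ->). apply Hub; auto. Qed.

End WithB.

Lemma ln_neg x : 0 < x < 1 -> ln x < 0.
Proof. intros Hx. rewrite <- ln_1. apply ln_increasing; lra. Qed.

Lemma Gt_ln y : 0 < y -> Gt (- ln y) = I_integrand a j y * y.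
Proof. intros Hy. unfold Gt. rewrite Ropp_involutive, exp_ln; auto. Qed.

Lemma cov u v : 0 < u -> u <= v -> v < 1 ->
  ex_RInt (I_integrand a j) u v /\ RInt (I_integrand a j) u v = RInt Gt (- ln v) (- ln u).
Proof. intros Hu Huv Hv.
 assert (Hmin : Rmin u v = u) by (apply Rmin_left; lra). assert (Hmax : Rmax u v = v) by (apply Rmax_right; lra).
 pose (h := fun y : R => (- / y) * Gt (- ln y)).
 assert (Hcg : forall x, u <= x <= v -> continuous Gt (- ln x)).
 { intros x Hx. apply Gt_cont. pose proof (ln_neg x ltac:(lra)). lra. }
 assert (Hcomp : RInt h u v = RInt Gt (- ln u) (- ln v)).
 { assert (HC := @RInt_comp R_CompleteNormedModule Gt (fun x => - ln x) (fun x => - / x) u v).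
   rewrite Hmin, Hmax in HC. apply HC.
   - intros; apply Hcg; auto.
   - intros x Hx. split. apply (is_derive_opp ln x (/ x)). apply is_derive_ln; lra.
     apply cR_opp. apply continuous_Rinv. lra. }
 assert (Hh : forall y, 0 < y -> h y = - I_integrand a j y).
 { intros y Hy. unfold h. rewrite Gt_ln by auto. field; lra. }
 assert (Hexh : ex_RInt h u v).
 { apply (@ex_RInt_continuous R_CompleteNormedModule). rewrite Hmin, Hmax. intros z Hz.
   apply (cR_mult (fun y => - / y) (fun y => Gt (- ln y))). apply cR_opp, continuous_Rinv; lra.
   apply (continuous_comp (fun y => - ln y) Gt). apply cR_opp, continuous_ln; lra. apply Hcg; auto. }
 assert (Hexh' : ex_RInt (fun y => - h y) u v).
 { exact (@ex_RInt_opp R_NormedModule h u v Hexh). }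
 assert (HexI : ex_RInt (I_integrand a j) u v).
 { apply (@ex_RInt_ext R_NormedModule (fun y => - h y)). rewrite Hmin, Hmax. intros x Hx. rewrite Hh by lra.
   apply Ropp_involutive. exact Hexh'. }
 split; auto.
 rewrite (@RInt_ext R_CompleteNormedModule (I_integrand a j) (fun y => - h y)).
 2:{ rewrite Hmin, Hmax. intros x Hx. rewrite Hh by lra. symmetry; apply Ropp_involutive. }
 assert (Hop := @RInt_opp R_CompleteNormedModule h u v Hexh). simpl in Hop. unfold opp in Hop; simpl in Hop.
 rewrite Hop, Hcomp.
 assert (Hsw := @opp_RInt_swap R_CompleteNormedModule Gt (- ln u) (- ln v)). unfold opp in Hsw; simpl in Hsw.
 apply Hsw. apply Gt_ex.
 pose proof (ln_neg u ltac:(lra)); lra. pose proof (ln_neg v ltac:(lra)); lra. Qed.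

Lemma main_sec : exists I (E : nat -> R), improper_int_open (I_integrand a j) 0 1 I /\
  (forall N, (2 <= N)%nat -> improper_int0 (EU_integrand a N j) (E N)) /\ Un_cv E I.
Proof.
 destruct D1 as [B1 [HB1 HD1]]. destruct D0 as (N0 & B0 & HB0 & HD0).
 destruct (I_ex B1 HB1 HD1 B0 N0 HB0 HD0) as [I [HI1 HI2]].
 assert (HE := E_ex B1 HB1 HD1).
 set (E := fun N => proj1_sig (constructive_indefinite_description _ (HE N))).
 assert (HE' : forall N, improper_int0 (EU_integrand a N j) (E N) /\ forall T, 1 <= T ->
    RInt (EU_integrand a N j) 0 T <= E N <= RInt (EU_integrand a N j) 0 T + tauf B1 T).
 { intros N. unfold E. destruct (constructive_indefinite_description _ (HE N)) as [l Hl]. exact Hl. }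
 exists I, E. split; [|split].
 - split.
   + intros u v Hu Huv Hv. constructor. apply ex_RInt_Reals_0. apply (cov u v); lra.
   + intros eps He. destruct (tau_small B1 HB1 (eps / 2) ltac:(lra)) as [Ts [HTs Htau]].
     set (ds := Rmin 1 (eps / (2 * (B0 + 1)))).
     assert (Hds : 0 < ds) by (unfold ds; apply Rmin_glb_lt; [lra|apply Rdiv_lt_0_compat; lra]).
     assert (Hds1 : ds <= 1) by apply Rmin_l.
     assert (HB0ds : B0 * ds < eps / 2).
     { apply Rle_lt_trans with (B0 * (eps / (2 * (B0 + 1)))). apply Rmult_le_compat_l; [lra|apply Rmin_r].
       apply (Rmult_lt_reg_r (2 * (B0 + 1))). lra. field_simplify; try lra; try nra. }
     set (d := Rmin (1 / 2) (Rmin (exp (- Ts)) (ds / 2))).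
     assert (Hd : 0 < d). { unfold d. apply Rmin_glb_lt. lra. apply Rmin_glb_lt. apply exp_pos. lra. }
     exists d. split; auto. intros u v pr Hu Hud Hvd Hv1 Huv.
     assert (Hd1 : d <= 1 / 2) by apply Rmin_l.
     assert (Hd2 : d <= exp (- Ts)) by (eapply Rle_trans; [apply Rmin_r|apply Rmin_l]).
     assert (Hd3 : d <= ds / 2) by (eapply Rle_trans; [apply Rmin_r|apply Rmin_r]).
     rewrite <- RInt_Reals. destruct (cov u v ltac:(lra) Huv Hv1) as [_ ->].
     pose proof (ln_neg v ltac:(lra)). pose proof (ln_neg u ltac:(lra)).
     assert (Hlnuv : ln u <= ln v). { destruct Huv as [Huv|Huv]. left; apply ln_increasing; lra. subst; lra. }
     assert (Hdel : - ln v <= ds). { pose proof (neg_ln_le v ltac:(lra)). lra. }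
     assert (HT : Ts <= - ln u). { assert (ln u < - Ts). { rewrite <- (ln_exp (- Ts)). apply ln_increasing; lra. } lra. }
     pose proof (HI2 (- ln v) (- ln u) ltac:(lra) ltac:(lra)).
     pose proof (HI1 (- ln v) (- ln u) ltac:(lra) ltac:(lra)).
     pose proof (tau_mono B1 Ts (- ln u) HB1 HT).
     assert (B0 * (- ln v) <= B0 * ds) by (apply Rmult_le_compat_l; lra).
     rewrite Rabs_left1 by lra. lra.
 - intros N _. apply HE'.
 - intros eps He. destruct (tau_small B1 HB1 (eps / 5) ltac:(lra)) as [T [HT Htau]].
   set (dl := Rmin 1 (eps / (5 * (B0 + 1)))).
   assert (Hdl : 0 < dl) by (unfold dl; apply Rmin_glb_lt; [lra|apply Rdiv_lt_0_compat; lra]).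
   assert (Hdl1 : dl <= 1) by apply Rmin_l.
   assert (HB0dl : B0 * dl < eps / 5).
   { apply Rle_lt_trans with (B0 * (eps / (5 * (B0 + 1)))). apply Rmult_le_compat_l; [lra|apply Rmin_r].
     apply (Rmult_lt_reg_r (5 * (B0 + 1))). lra. field_simplify; try lra; try nra. }
   set (eta := eps / (5 * (T - dl + 1))).
   assert (Heta : 0 < eta) by (apply Rdiv_lt_0_compat; lra).
   destruct (G_unif dl T Hdl eta Heta) as [N1 HN1].
   exists (max N0 N1). intros n Hn. unfold R_dist.
   destruct (HE' n) as [_ HEn]. destruct (HEn T HT) as [HEa HEb].
   rewrite <- (chasles (EU_integrand a n j) 0 dl T) in HEa, HEb by apply EU_ex.
   assert (H0d : 0 <= RInt (EU_integrand a n j) 0 dl <= B0 * dl).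
   { split. apply RInt_nonneg. lra. apply EU_ex. intros; apply EU_nonneg; lra.
     replace (B0 * dl) with (B0 * (dl - 0)) by ring. apply RInt_le_const. lra. apply EU_ex.
     intros x Hx. apply HD0. lia. lra. }
   assert (Hmid : Rabs (RInt (EU_integrand a n j) dl T - RInt Gt dl T) <= (T - dl) * eta).
   { apply RInt_diff_le. lra. apply EU_ex. apply Gt_ex; lra. intros t Ht.
     rewrite Rabs_minus_sym. apply HN1. lia. lra. }
   assert (Hmid2 : (T - dl) * eta <= eps / 5).
   { unfold eta. apply (Rmult_le_reg_r (5 * (T - dl + 1))). lra.
     field_simplify; try lra; try nra. }
   pose proof (HI1 dl T Hdl ltac:(lra)). pose proof (HI2 dl T ltac:(lra) HT).
   pose proof (Rle_abs (RInt (EU_integrand a n j) dl T - RInt Gt dl T)). pose proof (Rle_abs (- (RInt (EU_integrand a n j) dl T - RInt Gt dl T))). rewrite Rabs_Ropp in *. apply Rabs_def1; lra. Qed.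

End Big.

Lemma rpow_1 b : rpow 1 b = 1.
Proof. unfold rpow. destruct (Rle_dec 1 0). lra. unfold Rpower. rewrite ln_1, Rmult_0_r, exp_0. reflexivity. Qed.

Lemma xa_is_1 (a : nat -> R) (j : nat)
  (Hpos : forall k, (1 <= k)%nat -> 0 < a k)
  (Hgrowth : exists C nu M, 0 < nu /\ 0 < M /\
     forall m, M <= m -> forall n, Astar_upto a n m <= C * Rpower m nu)
  (xa : R) (Hxa : is_x_alpha a xa) : xa = 1.
Proof. destruct Hxa as [H1 H2].
 assert (Hs1 : forall n, sumR n (fun k => rpow 1 (a k)) = INR n).
 { induction n. reflexivity. rewrite sumR_S, S_INR, IHn, rpow_1. reflexivity. }
 assert (Hin : 0 <= 1 <= 1 /\ sum_pow_diverges a 1).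
 { split. lra. intros M. destruct (INR_archimed 1 M ltac:(lra)) as [N HN]. exists N. intros n Hn.
   rewrite Hs1. apply le_INR in Hn. lra. }
 pose proof (H1 1 Hin).
 assert (1 <= xa); [|lra].
 apply H2. intros y [Hy Hdiv]. apply Rnot_lt_le. intros Hy1.
 destruct (Rle_dec y 0).
 - destruct (Hdiv 0) as [N HN]. specialize (HN N (le_n _)).
   assert (sumR N (fun k => rpow y (a k)) = 0).
   { clear HN. induction N. reflexivity. rewrite sumR_S, IHN. unfold rpow. destruct (Rle_dec y 0); [lra|lra]. }
   lra.
 - set (d := - ln y). assert (Hy' : y = exp (- d)) by (unfold d; rewrite Ropp_involutive, exp_ln; lra).
   assert (Hd : 0 < d). { unfold d. assert (ln y < 0); [|lra]. rewrite <- ln_1. apply ln_increasing; lra. }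
   destruct (Sn_bound a j Hpos Hgrowth d Hd) as [B HB].
   destruct (Hdiv B) as [N HN]. specialize (HN N (le_n _)). specialize (HB N).
   assert (sumR N (fun k => rpow y (a k)) <= Sn a j d N).
   { unfold Sn. apply sumR_le. intros k Hk. rewrite Hy', rpow_exp. unfold w.
     pose proof (Hpos k ltac:(lia)). assert (0 <= a k ^ j) by (apply pow_le; lra).
     pose proof (exp_pos (- (a k * d))). nra. }
   lra. Qed.

Theorem mainTheorem11 (a : nat -> R)
  (Hpos : forall k, (1 <= k)%nat -> 0 < a k)
  (Hgrowth : exists C nu M, 0 < nu /\ 0 < M /\
     forall m, M <= m -> forall n, Astar_upto a n m <= C * Rpower m nu)
  (xa : R) (Hxa : is_x_alpha a xa)
  (j : nat) (Hj : (2 <= j)%nat) :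
  exists (I : R) (E : nat -> R),
    improper_int_open (I_integrand a j) 0 xa I /\
    (forall N, (2 <= N)%nat -> improper_int0 (EU_integrand a N j) (E N)) /\
    Un_cv E I.
Proof.
  rewrite (xa_is_1 a j Hpos Hgrowth xa Hxa).
  destruct (amin_ex a Hpos Hgrowth) as [c [Hc Hca]].
  exact (main_sec a j Hpos Hgrowth c Hc Hca Hj).
Qed.
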